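(* Let $\mathscr{A}$ be a closed set of games with misère quotient $(\mathcal{Q},\mathcal{P})$ and quotient map $\Phi$, and let $G$ be a game all of whose options lie in $\mathscr{A}$. Suppose there is $H\in\mathscr{A}$ with $\{\Phi(G'):G'\text{ an option of }G\}=\{\Phi(H'):H'\text{ an option of }H\}$. Let $\mathscr{A}^+=\mathrm{cl}(\mathscr{A}\cup\{G\})$ with quotient map $\Phi^+$. Then $\mathcal{Q}(\mathscr{A}^+)\cong\mathcal{Q}(\mathscr{A})$ via an isomorphism of bipartite monoids $\iota:\mathcal{Q}(\mathscr{A})\to\mathcal{Q}(\mathscr{A}^+)$ satisfying $\iota(\Phi(X))=\Phi^+(X)$ for all $X\in\mathscr{A}$, and $\Phi^+(G)=\Phi^+(H)$.
   Context: Games are finite, loopfree impartial games identified with the finite set of their options; disjunctive sum $G+H=\{G'+H\}\cup\{G+H'\}$. Misère outcome: $o^-(G)=\mathscr{P}$ iff $G\neq0$ and every option has outcome $\mathscr{N}$; otherwise $\mathscr{N}$. A set of games is closed if it contains all options of its members and is closed under $+$. $\mathrm{cl}(\mathscr{S})$ is the closure under addition of the set of all subpositions of members of $\mathscr{S}$. For closed $\mathscr{A}$: $G\equiv_\mathscr{A}H$ iff $o^-(G+X)=o^-(H+X)$ for all $X\in\mathscr{A}$; the misère quotient $\mathcal{Q}(\mathscr{A})=(\mathcal{Q},\mathcal{P})$ is the commutative monoid of $\equiv_\mathscr{A}$-classes ($[G][H]=[G+H]$) together with the set $\mathcal{P}$ of classes of misère $\mathscr{P}$-positions; $\Phi(G)=[G]$.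 An isomorphism of bipartite monoids $(\mathcal{Q},\mathcal{P})\to(\mathcal{S},\mathcal{R})$ is a monoid isomorphism $f$ with $x\in\mathcal{P}\iff f(x)\in\mathcal{R}$. *)

(* Defs.v *)
From Stdlib Require Import List Bool ClassicalEpsilon.
Import ListNotations.

Inductive game : Type := Opt : list game -> game.

Definition opts (G : game) : list game := match G with Opt gs => gs end.

Definition zero : game := Opt [].

(* Disjunctive sum: G + H = {G' + H} u {G + H'} *)
Fixpoint gsum (G : game) : game -> game :=
  fix aux (H : game) : game :=
    match G, H with
    | Opt gs, Opt hs => Opt (map (fun g => gsum g H) gs ++ map aux hs)
    end.

(* Misère outcome: isP G = true iff o^-(G) = P, i.e. G <> 0 and every
   option of G is an N-position. *)
Fixpoint isP (G : game) : bool :=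
  match G with
  | Opt gs => match gs with [] => false | _ => true end
              && forallb (fun g => negb (isP g)) gs
  end.

Definition closed (A : game -> Prop) : Prop :=
  (forall X, A X -> forall X', In X' (opts X) -> A X') /\
  (forall X Y, A X -> A Y -> A (gsum X Y)).

Inductive subpos : game -> game -> Prop :=
| subpos_refl G : subpos G G
| subpos_opt G G' X : In G' (opts G) -> subpos X G' -> subpos X G.

Inductive cl (S : game -> Prop) : game -> Prop :=
| cl_sub X G : S G -> subpos X G -> cl S X
| cl_add X Y : cl S X -> cl S Y -> cl S (gsum X Y).

Definition equivA (A : game -> Prop) (G H : game) : Prop :=
  forall X, A X -> isP (gsum G X) = isP (gsum H X).

Definition cls (A : game -> Prop) (X : game) : game -> Prop :=
  fun Y => A Y /\ equivA A X Y.

Definition Q (A : game -> Prop) : Type :=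
  { c : game -> Prop | exists X, A X /\ c = cls A X }.

Definition Phi (A : game -> Prop) (X : game) (hX : A X) : Q A :=
  exist _ (cls A X) (ex_intro _ X (conj hX eq_refl)).

Definition rep {A : game -> Prop} (c : Q A) : game :=
  proj1_sig (constructive_indefinite_description _ (proj2_sig c)).

Lemma rep_spec {A : game -> Prop} (c : Q A) :
  A (rep c) /\ proj1_sig c = cls A (rep c).
Proof.
  unfold rep. destruct (constructive_indefinite_description _ _) as [X HX].
  exact HX.
Qed.

(* Monoid product [X][Y] = [X+Y] (computed on representatives; when A is
   closed the sum of representatives lies in A). *)
Definition qmul {A : game -> Prop} (c d : Q A) : Q A :=
  match excluded_middle_informative (A (gsum (rep c) (rep d))) with
  | left h => Phi A (gsum (rep c) (rep d)) h
  | right _ => c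
  end.

Definition qP {A : game -> Prop} (c : Q A) : Prop :=
  exists X, proj1_sig c X /\ isP X = true.

(* Main.v *)
Require Import Defs.
From Stdlib Require Import List Lia Bool ClassicalEpsilon ProofIrrelevance FunctionalExtensionality PropExtensionality.
Import ListNotations.

Fixpoint gsize (G : game) : nat :=
  match G with Opt gs => S (list_sum (map gsize gs)) end.

Lemma gsize_pos G : 1 <= gsize G.
Proof. destruct G; simpl; lia. Qed.

Lemma gsize_opt G g : In g (opts G) -> gsize g < gsize G.
Proof.
  destruct G as [gs]; simpl. intro Hin.
  assert (gsize g <= list_sum (map gsize gs)); [|lia].
  induction gs as [|a gs IH]; simpl in *; [contradiction|].
  destruct Hin as [<-|Hin]; [lia|]. specialize (IH Hin). lia.
Qed.

Lemma opts_sum G H : opts (gsum G H) =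
  map (fun g => gsum g H) (opts G) ++ map (gsum G) (opts H).
Proof. destruct G, H; reflexivity. Qed.

Lemma in_opts_sum G H w : In w (opts (gsum G H)) ->
  (exists g, In g (opts G) /\ w = gsum g H) \/ (exists h, In h (opts H) /\ w = gsum G h).
Proof.
  rewrite opts_sum, in_app_iff, !in_map_iff.
  intros [[x [? ?]]|[x [? ?]]]; [left|right]; exists x; auto.
Qed.

Lemma opt_sum_l G H g : In g (opts G) -> In (gsum g H) (opts (gsum G H)).
Proof. intro. rewrite opts_sum, in_app_iff, !in_map_iff. left; eauto. Qed.
Lemma opt_sum_r G H h : In h (opts H) -> In (gsum G h) (opts (gsum G H)).
Proof. intro. rewrite opts_sum, in_app_iff, !in_map_iff. right; eauto. Qed.

Inductive sim : game -> game -> Prop :=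
| sim_intro gs hs :
   (forall g, In g gs -> exists h, In h hs /\ sim g h) ->
   (forall h, In h hs -> exists g, In g gs /\ sim g h) ->
   sim (Opt gs) (Opt hs).

Lemma sim_mk Y Z : (forall y, In y (opts Y) -> exists z, In z (opts Z) /\ sim y z) ->
  (forall z, In z (opts Z) -> exists y, In y (opts Y) /\ sim y z) -> sim Y Z.
Proof. destruct Y, Z; simpl; constructor; auto. Qed.
Lemma sim_l Y Z : sim Y Z -> forall y, In y (opts Y) -> exists z, In z (opts Z) /\ sim y z.
Proof. intros [gs hs H1 H2]; simpl; auto. Qed.
Lemma sim_r Y Z : sim Y Z -> forall z, In z (opts Z) -> exists y, In y (opts Y) /\ sim y z.
Proof. intros [gs hs H1 H2]; simpl; auto. Qed.

Ltac sz := repeat match goal with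
  | H : In ?g (opts ?G) |- _ => pose proof (gsize_opt _ _ H); clear H end; lia.

Lemma sim_refl G : sim G G.
Proof.
  assert (forall n G, gsize G <= n -> sim G G); [|eauto].
  induction n; intros X HX; [pose proof (gsize_pos X); lia|].
  apply sim_mk; intros y Hy; exists y; split; auto;
    apply IHn; pose proof (gsize_opt _ _ Hy); lia.
Qed.

Lemma sim_sym G H : sim G H -> sim H G.
Proof.
  assert (forall n G H, gsize G <= n -> sim G H -> sim H G); [|eauto].
  induction n; intros X Y HX HS; [pose proof (gsize_pos X); lia|].
  apply sim_mk.
  - intros y Hy. destruct (sim_r _ _ HS y Hy) as [x [Hx Hs]].
    exists x; split; auto. apply (IHn x); auto. pose proof (gsize_opt _ _ Hx); lia.
  - intros x Hx. destruct (sim_l _ _ HS x Hx) as [y [Hy Hs]].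
    exists y; split; auto. apply (IHn x); auto. pose proof (gsize_opt _ _ Hx); lia.
Qed.

Lemma sim_trans X Y Z : sim X Y -> sim Y Z -> sim X Z.
Proof.
  revert X Y Z.
  assert (forall n X Y Z, gsize X <= n -> sim X Y -> sim Y Z -> sim X Z); [|eauto].
  induction n; intros X Y Z HX H1 H2; [pose proof (gsize_pos X); lia|].
  apply sim_mk.
  - intros x Hx. destruct (sim_l _ _ H1 x Hx) as [y [Hy Hs]].
    destruct (sim_l _ _ H2 y Hy) as [z [Hz Hs']].
    exists z; split; auto. apply (IHn x y); auto. pose proof (gsize_opt _ _ Hx); lia.
  - intros z Hz. destruct (sim_r _ _ H2 z Hz) as [y [Hy Hs]].
    destruct (sim_r _ _ H1 y Hy) as [x [Hx Hs']].
    exists x; split; auto. apply (IHn x y); auto. pose proof (gsize_opt _ _ Hx); lia.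
Qed.

Lemma isP_true Y : isP Y = true <-> opts Y <> [] /\ forall y, In y (opts Y) -> isP y = false.
Proof.
  destruct Y as [ys]. destruct ys as [|y0 ys].
  - simpl. split; [discriminate| intros [H _]; congruence].
  - change (isP (Opt (y0 :: ys))) with (forallb (fun g => negb (isP g)) (y0 :: ys)). simpl (opts _). rewrite forallb_forall. split.
    + intros H. split; [discriminate|]. intros y Hy. specialize (H y Hy).
      destruct (isP y); auto.
    + intros [_ H] y Hy. rewrite H; auto.
Qed.

Lemma isP_match Y Z :
  (forall y, In y (opts Y) -> exists z, In z (opts Z) /\ isP y = isP z) ->
  (forall z, In z (opts Z) -> exists y, In y (opts Y) /\ isP y = isP z) ->
  isP Y = isP Z.
Proof.
  intros H1 H2. apply Bool.eq_iff_eq_true. rewrite !isP_true.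
  split; intros [Hne Hall]; split.
  - assert (exists y, In y (opts Y)) as [y Hy]
      by (destruct (opts Y); [congruence| eexists; left; eauto]).
    destruct (H1 y Hy) as [z [Hz _]]. intro E; rewrite E in Hz; contradiction.
  - intros z Hz. destruct (H2 z Hz) as [y [Hy E]]. rewrite <- E; auto.
  - assert (exists z, In z (opts Z)) as [z Hz]
      by (destruct (opts Z); [congruence| eexists; left; eauto]).
    destruct (H2 z Hz) as [y [Hy _]]. intro E; rewrite E in Hy; contradiction.
  - intros y Hy. destruct (H1 y Hy) as [z [Hz E]]. rewrite E; auto.
Qed.

Lemma isP_sim Y Z : sim Y Z -> isP Y = isP Z.
Proof.
  revert Y Z.
  assert (forall n Y Z, gsize Y <= n -> sim Y Z -> isP Y = isP Z); [|eauto].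
  induction n; intros Y Z HY HS; [pose proof (gsize_pos Y); lia|].
  apply isP_match.
  - intros y Hy. destruct (sim_l _ _ HS y Hy) as [z [Hz Hs]].
    exists z; split; auto. apply IHn; auto. pose proof (gsize_opt _ _ Hy); lia.
  - intros z Hz. destruct (sim_r _ _ HS z Hz) as [y [Hy Hs]].
    exists y; split; auto. apply IHn; auto. pose proof (gsize_opt _ _ Hy); lia.
Qed.

Lemma gsum_sim G G' H H' : sim G G' -> sim H H' -> sim (gsum G H) (gsum G' H').
Proof.
  revert G G' H H'.
  assert (forall n G G' H H', gsize G + gsize H <= n -> sim G G' -> sim H H' ->
     sim (gsum G H) (gsum G' H')); [|eauto].
  induction n; intros G G' H H' Hn HG HH; [pose proof (gsize_pos G); lia|].
  apply sim_mk.
  - intros w Hw; apply in_opts_sum in Hw as [[g [Hg ->]]|[h [Hh ->]]].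
    + destruct (sim_l _ _ HG g Hg) as [g' [Hg' Hs]].
      exists (gsum g' H'); split; [apply opt_sum_l; auto|]. apply IHn; auto.
      pose proof (gsize_opt _ _ Hg); lia.
    + destruct (sim_l _ _ HH h Hh) as [h' [Hh' Hs]].
      exists (gsum G' h'); split; [apply opt_sum_r; auto|]. apply IHn; auto.
      pose proof (gsize_opt _ _ Hh); lia.
  - intros w Hw; apply in_opts_sum in Hw as [[g' [Hg' ->]]|[h' [Hh' ->]]].
    + destruct (sim_r _ _ HG g' Hg') as [g [Hg Hs]].
      exists (gsum g H); split; [apply opt_sum_l; auto|]. apply IHn; auto.
      pose proof (gsize_opt _ _ Hg); lia.
    + destruct (sim_r _ _ HH h' Hh') as [h [Hh Hs]].
      exists (gsum G h); split; [apply opt_sum_r; auto|]. apply IHn; auto.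
      pose proof (gsize_opt _ _ Hh); lia.
Qed.

Lemma sum_comm G H : sim (gsum G H) (gsum H G).
Proof.
  revert G H.
  assert (forall n G H, gsize G + gsize H <= n -> sim (gsum G H) (gsum H G)); [|eauto].
  induction n; intros G H Hn; [pose proof (gsize_pos G); lia|].
  apply sim_mk.
  - intros w Hw; apply in_opts_sum in Hw as [[g [Hg ->]]|[h [Hh ->]]].
    + exists (gsum H g); split; [apply opt_sum_r; auto|]. apply IHn.
      pose proof (gsize_opt _ _ Hg); lia.
    + exists (gsum h G); split; [apply opt_sum_l; auto|]. apply IHn.
      pose proof (gsize_opt _ _ Hh); lia.
  - intros w Hw; apply in_opts_sum in Hw as [[h [Hh ->]]|[g [Hg ->]]].
    + exists (gsum G h); split; [apply opt_sum_r; auto|]. apply IHn.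
      pose proof (gsize_opt _ _ Hh); lia.
    + exists (gsum g H); split; [apply opt_sum_l; auto|]. apply IHn.
      pose proof (gsize_opt _ _ Hg); lia.
Qed.

Lemma sum_assoc G H K : sim (gsum (gsum G H) K) (gsum G (gsum H K)).
Proof.
  revert G H K.
  assert (forall n G H K, gsize G + gsize H + gsize K <= n ->
    sim (gsum (gsum G H) K) (gsum G (gsum H K))); [|eauto].
  induction n; intros G H K Hn; [pose proof (gsize_pos G); lia|].
  apply sim_mk.
  - intros w Hw; apply in_opts_sum in Hw as [[x [Hx ->]]|[k [Hk ->]]].
    + apply in_opts_sum in Hx as [[g [Hg ->]]|[h [Hh ->]]].
      * exists (gsum g (gsum H K)); split; [apply opt_sum_l; auto|]. apply IHn.
        pose proof (gsize_opt _ _ Hg); lia.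
      * exists (gsum G (gsum h K)); split; [apply opt_sum_r, opt_sum_l; auto|]. apply IHn.
        pose proof (gsize_opt _ _ Hh); lia.
    + exists (gsum G (gsum H k)); split; [apply opt_sum_r, opt_sum_r; auto|]. apply IHn.
      pose proof (gsize_opt _ _ Hk); lia.
  - intros w Hw; apply in_opts_sum in Hw as [[g [Hg ->]]|[y [Hy ->]]].
    + exists (gsum (gsum g H) K); split; [apply opt_sum_l, opt_sum_l; auto|]. apply IHn.
      pose proof (gsize_opt _ _ Hg); lia.
    + apply in_opts_sum in Hy as [[h [Hh ->]]|[k [Hk ->]]].
      * exists (gsum (gsum G h) K); split; [apply opt_sum_l, opt_sum_r; auto|]. apply IHn.
        pose proof (gsize_opt _ _ Hh); lia.
      * exists (gsum (gsum G H) k); split; [apply opt_sum_r; auto|]. apply IHn.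
        pose proof (gsize_opt _ _ Hk); lia.
Qed.

Lemma zero_l X : sim (gsum zero X) X.
Proof.
  revert X.
  assert (forall n X, gsize X <= n -> sim (gsum zero X) X); [|eauto].
  induction n; intros X Hn; [pose proof (gsize_pos X); lia|].
  apply sim_mk.
  - intros w Hw; apply in_opts_sum in Hw as [[g [Hg ->]]|[x [Hx ->]]].
    + simpl in Hg; contradiction.
    + exists x; split; auto. apply IHn. pose proof (gsize_opt _ _ Hx); lia.
  - intros x Hx. exists (gsum zero x); split; [apply opt_sum_r; auto|].
    apply IHn. pose proof (gsize_opt _ _ Hx); lia.
Qed.

Lemma sim_sum_l G G' H : sim G G' -> sim (gsum G H) (gsum G' H).
Proof. intro; apply gsum_sim; auto; apply sim_refl. Qed.
Lemma sim_sum_r G H H' : sim H H' -> sim (gsum G H) (gsum G H').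
Proof. intro; apply gsum_sim; auto; apply sim_refl. Qed.

Lemma swap_r a b c : sim (gsum (gsum a b) c) (gsum (gsum a c) b).
Proof.
  eapply sim_trans; [apply sum_assoc|].
  eapply sim_trans; [apply sim_sum_r, sum_comm|].
  apply sim_sym, sum_assoc.
Qed.

Lemma interchange a b c d : sim (gsum (gsum a b) (gsum c d)) (gsum (gsum a c) (gsum b d)).
Proof.
  eapply sim_trans; [apply sum_assoc|].
  eapply sim_trans; [apply sim_sum_r, sim_sym, sum_assoc|].
  eapply sim_trans; [apply sim_sum_r, sim_sum_l, sum_comm|].
  eapply sim_trans; [apply sim_sum_r, sum_assoc|].
  apply sim_sym, sum_assoc.
Qed.

Fixpoint addk (X : game) (k : nat) (K : game) : game :=
  match k with 0 => X | S j => addk (gsum X K) j K end.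

Lemma addk_cong K j : forall X1 X2, sim X1 X2 -> sim (addk X1 j K) (addk X2 j K).
Proof. induction j; simpl; auto. intros; apply IHj, sim_sum_l; auto. Qed.

Lemma addk_pull K j : forall X V, sim (addk (gsum X V) j K) (gsum V (addk X j K)).
Proof.
  induction j; simpl; intros X V; [apply sum_comm|].
  eapply sim_trans; [apply addk_cong, swap_r|]. apply IHj.
Qed.

Lemma addk_split K j X : sim (addk X j K) (gsum X (addk zero j K)).
Proof.
  eapply sim_trans; [apply addk_cong, sim_sym, zero_l|]. apply addk_pull.
Qed.

Lemma addk_add K a : forall b X, addk X (a + b) K = addk (addk X a K) b K.
Proof. induction a; simpl; auto. Qed.

Lemma addk_sum K X Z k l :
  sim (gsum (addk X k K) (addk Z l K)) (addk (gsum X Z) (k + l) K).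
Proof.
  eapply sim_trans; [apply gsum_sim; apply addk_split|].
  eapply sim_trans; [apply interchange|].
  rewrite addk_add. apply sim_sym.
  eapply sim_trans; [apply addk_cong, addk_split|].
  eapply sim_trans; [apply addk_split|]. apply sum_assoc.
Qed.

Lemma OptsBase K j : forall X o, In o (opts X) -> In (addk o j K) (opts (addk X j K)).
Proof. induction j; simpl; auto. intros; apply IHj, opt_sum_l; auto. Qed.

Lemma OptsR K j X K' : In K' (opts K) -> In (addk (gsum X K') j K) (opts (addk X (S j) K)).
Proof. intro; simpl; apply OptsBase, opt_sum_r; auto. Qed.

Lemma OptsL K k : forall X w, In w (opts (addk X k K)) ->
  (exists X'', In X'' (opts X) /\ sim w (addk X'' k K)) \/
  (exists j K', k = S j /\ In K' (opts K) /\ sim w (addk (gsum X K') j K)).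
Proof.
  induction k; intros X w Hw.
  - left; exists w; split; auto; apply sim_refl.
  - simpl in Hw. destruct (IHk _ _ Hw) as [[o [Ho Hs]] | [i [K' [-> [HK' Hs]]]]].
    + apply in_opts_sum in Ho as [[x [Hx ->]]|[k' [Hk' ->]]].
      * left; exists x; split; auto.
      * right; exists k, k'; split; auto.
    + right; exists (S i), K'; split; auto; split; auto.
      eapply sim_trans; [exact Hs|]. simpl. apply addk_cong, swap_r.
Qed.

Lemma A_subpos A X Y : closed A -> A Y -> subpos X Y -> A X.
Proof.
  intros hA HY Hs; induction Hs; auto. apply IHHs. eapply (proj1 hA); eauto.
Qed.

Lemma A_zero A X : closed A -> A X -> A zero.
Proof.
  intros hA. revert X.
  assert (forall n X, gsize X <= n -> A X -> A zero); [|eauto].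
  induction n; intros X Hn HX; [pose proof (gsize_pos X); lia|].
  destruct X as [[|x xs]]; [exact HX|].
  apply (IHn x); [simpl in Hn; lia|]. apply (proj1 hA _ HX); simpl; auto.
Qed.

Lemma A_addk A K k : forall X, closed A -> A X -> A K -> A (addk X k K).
Proof. induction k; simpl; auto. intros; apply IHk; auto; apply (proj2 H); auto. Qed.

Lemma represent A G H : closed A -> (forall G', In G' (opts G) -> A G') -> A H ->
  forall Y, cl (fun X => A X \/ X = G) Y -> exists X k, A X /\ sim Y (addk X k G).
Proof.
  intros hA hGo hH Y HY. induction HY as [Y W HW Hs | Y1 Y2 _ [X1 [k1 [h1 s1]]] _ [X2 [k2 [h2 s2]]]].
  - destruct HW as [HW | ->].
    + exists Y, 0; split; [eapply A_subpos; eauto | apply sim_refl].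
    + inversion Hs; subst.
      * exists zero, 1; split; [eapply A_zero; eauto|]. simpl. apply sim_sym, zero_l.
      * exists Y, 0; split; [eapply A_subpos; [exact hA| apply hGo; eassumption| eassumption] | apply sim_refl].
  - exists (gsum X1 X2), (k1 + k2); split; [apply (proj2 hA); auto|].
    eapply sim_trans; [apply gsum_sim; eauto|]. apply addk_sum.
Qed.

Lemma L_swap A H X G' H' j : closed A -> A X -> A H -> equivA A G' H' ->
  isP (addk (gsum X G') j H) = isP (addk (gsum X H') j H).
Proof.
  intros hA hX hH e.
  rewrite (isP_sim _ _ (addk_pull H j X G')), (isP_sim _ _ (addk_pull H j X H')).
  apply e, A_addk; auto.
Qed.

Lemma key A G H : closed A -> (forall G', In G' (opts G) -> A G') -> A H ->
  (forall G', In G' (opts G) -> exists H', In H' (opts H) /\ equivA A G' H') ->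
  (forall H', In H' (opts H) -> exists G', In G' (opts G) /\ equivA A G' H') ->
  forall Y X k, A X -> sim Y (addk X k G) -> isP Y = isP (addk X k H).
Proof.
  intros hA hGo hH hGH hHG.
  assert (forall n Y, gsize Y <= n -> forall X k, A X -> sim Y (addk X k G) ->
     isP Y = isP (addk X k H)); [|eauto].
  induction n; intros Y HY X k hX hS; [pose proof (gsize_pos Y); lia|].
  apply isP_match.
  - intros y Hy. assert (Hsz : gsize y <= n) by (pose proof (gsize_opt _ _ Hy); lia).
    destruct (sim_l _ _ hS y Hy) as [w [Hw Hyw]].
    destruct (OptsL _ _ _ _ Hw) as [[x [Hx Hs]] | [j [G' [-> [HG' Hs]]]]].
    + exists (addk x k H); split; [apply OptsBase; auto|].
      apply (IHn y Hsz x k); [apply (proj1 hA _ hX); auto| eapply sim_trans; eauto].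
    + destruct (hGH G' HG') as [H' [HH' e]].
      exists (addk (gsum X H') j H); split; [apply OptsR; auto|].
      rewrite <- (L_swap A H X G' H' j); auto.
      apply (IHn y Hsz); [apply (proj2 hA); auto| eapply sim_trans; eauto].
  - intros z Hz.
    destruct (OptsL _ _ _ _ Hz) as [[x [Hx Hs]] | [j [H' [-> [HH' Hs]]]]].
    + destruct (sim_r _ _ hS (addk x k G) (OptsBase _ _ _ _ Hx)) as [y [Hy Hsy]].
      exists y; split; auto. rewrite (isP_sim _ _ Hs).
      apply (IHn y); [pose proof (gsize_opt _ _ Hy); lia | apply (proj1 hA _ hX); auto | auto].
    + destruct (hHG H' HH') as [G' [HG' e]].
      destruct (sim_r _ _ hS _ (OptsR G j X G' HG')) as [y [Hy Hsy]].
      exists y; split; auto. rewrite (isP_sim _ _ Hs), <- (L_swap A H X G' H' j); auto.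
      apply (IHn y); [pose proof (gsize_opt _ _ Hy); lia | apply (proj2 hA); auto | auto].
Qed.

Lemma equivA_refl B X : equivA B X X.
Proof. intros W _; reflexivity. Qed.
Lemma equivA_sym B X Y : equivA B X Y -> equivA B Y X.
Proof. intros e W hW; symmetry; auto. Qed.
Lemma equivA_trans B X Y Z : equivA B X Y -> equivA B Y Z -> equivA B X Z.
Proof. intros e1 e2 W hW; rewrite e1; auto. Qed.
Lemma equivA_sim B X Y : sim X Y -> equivA B X Y.
Proof. intros s W _; apply isP_sim, sim_sum_l; auto. Qed.
Lemma equivA_sub (B1 B2 : game -> Prop) X Y : (forall Z, B1 Z -> B2 Z) ->
  equivA B2 X Y -> equivA B1 X Y.
Proof. intros h e W hW; auto. Qed.
Lemma equivA_isP B X Y : B zero -> equivA B X Y -> isP X = isP Y.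
Proof.
  intros hz e.
  assert (forall Z, sim (gsum Z zero) Z) as hs
    by (intro Z; eapply sim_trans; [apply sum_comm| apply zero_l]).
  rewrite <- (isP_sim _ _ (hs X)), <- (isP_sim _ _ (hs Y)); auto.
Qed.
Lemma equivA_sumcong (B : game -> Prop) X X' Y Y' :
  (forall U V, B U -> B V -> B (gsum U V)) -> B X' -> B Y -> B Y' ->
  equivA B X X' -> equivA B Y Y' -> equivA B (gsum X Y) (gsum X' Y').
Proof.
  intros hB hX' hY hY' e1 e2 W hW.
  rewrite (isP_sim _ _ (sum_assoc X Y W)), e1 by auto.
  rewrite <- (isP_sim _ _ (sum_assoc X' Y W)).
  rewrite (isP_sim _ _ (sim_sum_l _ _ W (sum_comm X' Y))).
  rewrite (isP_sim _ _ (sum_assoc Y X' W)), e2 by auto.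
  rewrite <- (isP_sim _ _ (sum_assoc Y' X' W)).
  apply isP_sim, sim_sum_l, sum_comm.
Qed.

Lemma Q_eq B (c d : Q B) : proj1_sig c = proj1_sig d -> c = d.
Proof.
  destruct c as [c hc], d as [d hd]; simpl; intros ->. f_equal; apply proof_irrelevance.
Qed.

Lemma Phi_eq B X Y hX hY : equivA B X Y -> Phi B X hX = Phi B Y hY.
Proof.
  intro e. apply Q_eq; simpl. extensionality Z. apply propositional_extensionality.
  unfold cls; split; intros [hZ e']; split; auto; eapply equivA_trans; eauto.
  apply equivA_sym; auto.
Qed.

Lemma Phi_eq_inv B X Y hX hY : Phi B X hX = Phi B Y hY -> equivA B X Y.
Proof.
  intro e. apply (f_equal (@proj1_sig _ _)) in e; simpl in e.
  assert (h : cls B Y Y) by (split; auto; apply equivA_refl).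
  rewrite <- e in h. destruct h; auto.
Qed.

Lemma Phi_rep B (c : Q B) : c = Phi B (rep c) (proj1 (rep_spec c)).
Proof. apply Q_eq; simpl. exact (proj2 (rep_spec c)). Qed.

Lemma rep_Phi B X hX : equivA B X (rep (Phi B X hX)).
Proof.
  apply (Phi_eq_inv B X _ hX (proj1 (rep_spec _))). apply Phi_rep.
Qed.

Lemma Phi_c B Y hY (c : Q B) : equivA B (rep c) Y -> Phi B Y hY = c.
Proof.
  intro e. rewrite (Phi_rep B c). apply Phi_eq, equivA_sym; auto.
Qed.

Lemma qmul_eq B (hB : forall U V, B U -> B V -> B (gsum U V)) (c d : Q B) :
  qmul c d = Phi B (gsum (rep c) (rep d)) (hB _ _ (proj1 (rep_spec c)) (proj1 (rep_spec d))).
Proof.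
  unfold qmul. destruct (excluded_middle_informative _) as [h|n].
  - apply Phi_eq, equivA_refl.
  - exfalso; apply n, hB; apply (proj1 (rep_spec _)).
Qed.

Lemma qP_iff B (hz : B zero) (c : Q B) : qP c <-> isP (rep c) = true.
Proof.
  unfold qP. rewrite (proj2 (rep_spec c)). split.
  - intros [X [[hX e] hP]]. rewrite (equivA_isP B _ _ hz e); auto.
  - intro h. exists (rep c); split; auto. split; [apply (proj1 (rep_spec _))| apply equivA_refl].
Qed.

Theorem mainTheorem13 (A : game -> Prop) (G H : game) :
  closed A ->
  (forall G', In G' (opts G) -> A G') ->
  A H ->
  (forall G' (hG' : A G'), In G' (opts G) ->
     exists H' (hH' : A H'), In H' (opts H) /\ Phi A G' hG' = Phi A H' hH') ->
  (forall H' (hH' : A H'), In H' (opts H) ->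
     exists G' (hG' : A G'), In G' (opts G) /\ Phi A G' hG' = Phi A H' hH') ->
  let Ap := cl (fun X => A X \/ X = G) in
  exists iota : Q A -> Q Ap,
    (exists kappa : Q Ap -> Q A,
        (forall c, kappa (iota c) = c) /\ (forall d, iota (kappa d) = d)) /\
    (forall c d, iota (qmul c d) = qmul (iota c) (iota d)) /\
    (forall c, qP c <-> qP (iota c)) /\
    (forall X (hX : A X) (hX' : Ap X), iota (Phi A X hX) = Phi Ap X hX') /\
    (forall (hG : Ap G) (hH : Ap H), Phi Ap G hG = Phi Ap H hH).
Proof.
  intros hA hGo hH h4 h5 Ap.
  assert (hGH : forall G', In G' (opts G) -> exists H', In H' (opts H) /\ equivA A G' H').
  { intros G' HG'. destruct (h4 G' (hGo G' HG') HG') as [H' [hH' [HH' e]]].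
    exists H'; split; auto. eapply Phi_eq_inv; eauto. }
  assert (hHG : forall H', In H' (opts H) -> exists G', In G' (opts G) /\ equivA A G' H').
  { intros H' HH'. destruct (h5 H' (proj1 hA H hH H' HH') HH') as [G' [hG' [HG' e]]].
    exists G'; split; auto. eapply Phi_eq_inv; eauto. }
  assert (AAp : forall X, A X -> Ap X) by (intros X hX; apply (cl_sub _ X X); auto; constructor).
  assert (hApS : forall U V, Ap U -> Ap V -> Ap (gsum U V)) by (intros; apply cl_add; auto).
  assert (hAS : forall U V, A U -> A V -> A (gsum U V)) by (intros; apply (proj2 hA); auto).
  assert (hz : A zero) by (eapply A_zero; eauto).
  pose proof (key A G H hA hGo hH hGH hHG) as K.
  pose proof (represent A G H hA hGo hH) as R.
  assert (T : forall V Z W k, A V -> A Z -> sim W (addk Z k G) ->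
     isP (gsum V W) = isP (gsum V (addk Z k H))).
  { intros V Z W k hV hZ hs.
    rewrite <- (isP_sim _ _ (addk_pull H k Z V)).
    apply (K _ (gsum Z V) k); [auto|].
    eapply sim_trans; [apply sim_sum_r; exact hs|]. apply sim_sym, addk_pull. }
  assert (F1 : forall X X', A X -> A X' -> equivA A X X' -> equivA Ap X X').
  { intros X X' hX hX' e W hW. destruct (R W hW) as [Z [k [hZ hs]]].
    rewrite (T X Z W k), (T X' Z W k); auto. apply e, A_addk; auto. }
  assert (F2 : forall Y X k, A X -> sim Y (addk X k G) -> equivA Ap Y (addk X k H)).
  { intros Y X k hX hs W hW. destruct (R W hW) as [Z [l [hZ hs']]].
    rewrite (T (addk X k H) Z W l); auto; [|apply A_addk; auto].
    rewrite (isP_sim _ _ (addk_sum H X Z k l)).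
    apply (K _ (gsum X Z) (k + l)); [auto|].
    eapply sim_trans; [apply gsum_sim; eauto|]. apply addk_sum. }
  assert (Hrep : forall d : Q Ap, {p : game * nat | A (fst p) /\ sim (rep d) (addk (fst p) (snd p) G)}).
  { intro d. apply constructive_indefinite_description.
    destruct (R (rep d) (proj1 (rep_spec d))) as [X [k [hX hs]]]. exists (X, k); auto. }
  set (kap := fun d : Q Ap => Phi A (addk (fst (proj1_sig (Hrep d))) (snd (proj1_sig (Hrep d))) H)
        (A_addk A H _ _ hA (proj1 (proj2_sig (Hrep d))) hH)).
  assert (Hk : forall d, exists Y hY, kap d = Phi A Y hY /\ equivA Ap (rep d) Y).
  { intro d. unfold kap. destruct (Hrep d) as [[X k] [hX hs]]; simpl.
    eexists; eexists; split; [reflexivity|]. apply F2; auto. }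
  set (iota := fun c : Q A => Phi Ap (rep c) (AAp _ (proj1 (rep_spec c)))).
  assert (Hi : forall c, equivA Ap (rep c) (rep (iota c))) by (intro c; apply rep_Phi).
  exists iota. split; [|split; [|split; [|split]]].
  - exists kap. split.
    + intro c. destruct (Hk (iota c)) as [Y [hY [-> e]]]. apply Phi_c.
      apply (equivA_sub A Ap); auto. eapply equivA_trans; [apply Hi| exact e].
    + intro d. destruct (Hk d) as [Y [hY [-> e]]]. unfold iota. apply Phi_c.
      eapply equivA_trans; [exact e|]. apply F1; auto; [apply (proj1 (rep_spec _))|].
      apply rep_Phi.
  - intros c d. rewrite (qmul_eq A hAS c d), (qmul_eq Ap hApS (iota c) (iota d)).
    unfold iota at 1. apply Phi_eq.
    assert (hS : A (gsum (rep c) (rep d))) by (apply hAS; [apply (proj1 (rep_spec c))|apply (proj1 (rep_spec d))]).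
    apply (equivA_trans _ _ (gsum (rep c) (rep d))).
    { apply equivA_sym, F1; [exact hS | apply (proj1 (rep_spec _)) | apply rep_Phi]. }
    apply equivA_sumcong; auto; try apply (proj1 (rep_spec _)); try apply Hi.
    apply AAp, (proj1 (rep_spec _)).
  - intro c. rewrite (qP_iff A hz), (qP_iff Ap (AAp _ hz)).
    rewrite (equivA_isP Ap _ _ (AAp _ hz) (Hi c)). tauto.
  - intros X hX hX'. unfold iota. apply Phi_eq.
    apply equivA_sym, F1; auto; [apply (proj1 (rep_spec _))| apply rep_Phi].
  - intros hG' hH'. apply Phi_eq.
    eapply equivA_trans; [apply (F2 G zero 1); auto|].
    + simpl. apply sim_sym, zero_l.
    + apply equivA_sim. simpl. apply zero_l.
Qed.
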